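(* Let $a,b\in\mathbb{Z}$ with $a<b$, $\mathbf{x}\in\mathbb{Z}^m$ with $x_1\le\dots\le x_m$, and $\mathbf{y}\in(\mathbb{Z}')^n$ with $y_1\le\dots\le y_n$, where $\mathbb{Z}'=\mathbb{Z}+1/2$. Let $\mathbf{X}=(X_1,\dots,X_m)$ be an $m$-dimensional simple coalescing random walk on $\mathbb{Z}$ started at $\mathbf{x}$ and absorbed at $a$ and at $b$, and let $\mathbf{Y}=(Y_1,\dots,Y_n)$ be an $n$-dimensional simple coalescing random walk on $\mathbb{Z}'$ started at $\mathbf{y}$ and reflected at $a$ and $b$. Put $I^{\rightarrow}_{ij}(t,\mathbf{y})=1_{]y_j,y_{j+1}]}(X_i(t))$ and $I^{\leftarrow}_{ij}(t,\mathbf{x})=1_{]Y_j(t),Y_{j+1}(t)]}(x_i)$ for $1\le i\le m$, $1\le j\le n-1$. Then for each $t\ge0$ the joint distribution of the $m\times(n-1)$ random array $(I^{\rightarrow}_{ij}(t,\mathbf{Y}(0)))$ coincides with that of $(I^{\leftarrow}_{ij}(t,\mathbf{X}(0)))$.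
   Context: A simple coalescing random walk on $\mathbb{Z}$ (resp. $\mathbb{Z}'$) is a system of particles indexed $1,\dots,m$ in increasing order of initial positions, each free particle performing a continuous-time symmetric simple random walk jumping at total rate one (rate $1/2$ to each neighbour), independently, except that particles that occupy the same site coalesce and move together thereafter. Absorbed at $a$ and $b$: a particle that hits $a$ or $b$ stays there forever (it no longer jumps). Reflected at $a$ (for the walk on $\mathbb{Z}'$): each particle stays on the same side of $a$; a particle at $a-1/2$ jumps to $a-3/2$ at rate $1/2$ and its jump to the right is suppressed (it stays), and symmetrically a particle at $a+1/2$ jumps to $a+3/2$ at rate $1/2$ and its jump to the left is suppressed; otherwise it moves as a simple coalescing random walk. Reflection at two points $a<b$ is defined analogously at each point. *)

(* Defs.v *)
From HB Require Import structures.
From mathcomp Require Import all_boot all_order all_algebra.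
From mathcomp Require Import all_classical all_reals all_analysis.
Set Implicit Arguments. Unset Strict Implicit. Unset Printing Implicit Defensive.
Import Order.TTheory GRing.Theory Num.Theory.
Import numFieldNormedType.Exports.
Local Open Scope ring_scope.

(* A configuration of a coalescing walk with k particles is a seq int of size k:
   entry i = position of particle i.  For walks on Z' = Z + 1/2 the integer k
   encodes the half-integer site k + 1/2. *)

Definition moveAt (s : seq int) (z d : int) : seq int :=
  [seq (if w == z then w + d else w) | w <- s].

(* One step of the uniformized jump chain (uniformization rate lam, which must
   dominate the total jump rate): a finite list of (probability, next state).
   Each occupied site z (a cluster of coalesced particles) jumps at total rate 1,
   rate 1/2 to each neighbour. *)

Definition stepX (R : realType) (a b : int) (lam : R) (s : seq int)
  : seq (R * seq int) :=
  let F := undup [seq z <- s | (z != a) && (z != b)] in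
  (1 - (size F)%:R / lam, s) ::
  flatten [seq [:: ((2 * lam)^-1, moveAt s z 1); ((2 * lam)^-1, moveAt s z (-1))]
          | z <- F].

(* Walk on Z' (site k encodes k + 1/2) reflected at a and b: a jump crossing
   the point a or b is suppressed (the particle stays). The jump k -> k+1 crosses
   the point k+1, the jump k -> k-1 crosses the point k. *)
Definition stepY (R : realType) (a b : int) (lam : R) (s : seq int)
  : seq (R * seq int) :=
  let F := undup s in
  (1 - (size F)%:R / lam, s) ::
  flatten [seq [:: ((2 * lam)^-1,
                    if (z + 1 == a) || (z + 1 == b) then s else moveAt s z 1);
                   ((2 * lam)^-1,
                    if (z == a) || (z == b) then s else moveAt s z (-1))]
          | z <- F].

Fixpoint distK (R : realType) (step : seq int -> seq (R * seq int)) (k : nat)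
  (s0 : seq int) : seq (R * seq int) :=
  match k with
  | 0 => [:: (1, s0)]
  | k'.+1 => flatten [seq [seq (p.1 * q.1, q.2) | q <- step p.2]
                     | p <- distK step k' s0]
  end.

Definition probK (R : realType) (step : seq int -> seq (R * seq int)) (k : nat)
  (s0 : seq int) (E : pred (seq int)) : R :=
  \sum_(p <- distK step k s0) p.1 * (E p.2)%:R.

(* Law at time t of the continuous-time Markov chain with jump kernel given by
   uniformization at rate lam:  P(Z(t) in E) =
   sum_k e^{-lam t} (lam t)^k / k! * P(jump chain after k steps in E). *)
Definition ctmc_prob (R : realType) (lam : R)
  (step : seq int -> seq (R * seq int)) (s0 : seq int) (t : R)
  (E : pred (seq int)) : R :=
  limn (series (fun k : nat => expR (- (lam * t)) * (lam * t) ^+ k / (k`!)%:R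
                      * probK step k s0 E)).

(* I->_{ij}(t, y) = 1_{]y_j, y_{j+1}]}(X_i(t)), y_j = yk_j + 1/2  (0-indexed) *)
Definition arrayX (m n : nat) (yk : seq int) (X : seq int) : 'M[bool]_(m, n.-1) :=
  \matrix_(i < m, j < n.-1)
    (((nth 0 yk j)%:~R + 1/2 < (nth 0 X i)%:~R :> rat) &&
     ((nth 0 X i)%:~R <= (nth 0 yk j.+1)%:~R + 1/2 :> rat)).

(* I<-_{ij}(t, x) = 1_{]Y_j(t), Y_{j+1}(t)]}(x_i), Y_j = Yk_j + 1/2 *)
Definition arrayY (m n : nat) (x : seq int) (Yk : seq int) : 'M[bool]_(m, n.-1) :=
  \matrix_(i < m, j < n.-1)
    (((nth 0 Yk j)%:~R + 1/2 < (nth 0 x i)%:~R :> rat) &&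
     ((nth 0 x i)%:~R <= (nth 0 Yk j.+1)%:~R + 1/2 :> rat)).

(* Main.v *)
Require Import Defs.
From HB Require Import structures.
From mathcomp Require Import all_boot all_order all_algebra.
From mathcomp Require Import all_classical all_reals all_analysis.
Import Order.TTheory GRing.Theory Num.Theory.
Local Open Scope ring_scope.

From mathcomp Require Import ring lra zify.
Import Order.TTheory GRing.Theory Num.Theory.
Import numFieldNormedType.Exports.
Local Open Scope ring_scope.

Section Analytic.
Variable R : realType.

Lemma seriesE' (u : nat -> R) N : series u N = \sum_(k < N) u k.
Proof. by rewrite seriesEord. Qed.

Lemma series_nd (u : nat -> R) : (forall k, 0 <= u k) -> nondecreasing_seq (series u).
Proof.
move=> u0; apply/nondecreasing_seqP => k; rewrite !seriesE' big_ord_recr /=.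
by rewrite lerDl.
Qed.

Lemma series_le_lim (u : nat -> R) N : (forall k, 0 <= u k) -> cvgn (series u) ->
  series u N <= limn (series u).
Proof. by move=> u0 cu; apply: nondecreasing_cvgn_le => //; exact: series_nd. Qed.

Lemma series_ge0 (u : nat -> R) N : (forall k, 0 <= u k) -> 0 <= series u N.
Proof. by move=> u0; rewrite seriesE'; apply: sumr_ge0. Qed.

Lemma triangle (a b : nat -> R) N :
  series (fun k => \sum_(j < k.+1) a j * b (k - j)%N) N =
  \sum_(j < N) a j * series b (N - j)%N.
Proof.
elim: N => [|N IH]; first by rewrite seriesE' !big_ord0.
rewrite seriesE' in IH; rewrite seriesE' big_ord_recr /= IH.
rewrite [RHS](eq_bigr (fun j : 'I_N.+1 => a j * series b (N - j)%N + a j * b (N - j)%N)); last first.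
  move=> j _; have hj : (j <= N)%N by rewrite -ltnS.
  by rewrite subSn // !seriesE' big_ord_recr /= mulrDr.
rewrite big_split /=; congr (_ + _).
by rewrite big_ord_recr /= subnn seriesE' big_ord0 mulr0 addr0.
Qed.


Definition lhsT (lam t : R) (c : nat -> R) (k : nat) : R :=
  expR (- (lam * t)) * (lam * t) ^+ k / (k`!)%:R *
  \sum_(j < k.+1) 'C(k, j)%:R * (lam^-1) ^+ j * c j.
Definition rhsT (t : R) (c : nat -> R) (j : nat) : R := t ^+ j / (j`!)%:R * c j.

Lemma fact_neq0 k : (k`!)%:R != 0 :> R.
Proof. by rewrite pnatr_eq0 -lt0n fact_gt0. Qed.

Lemma lhsT_conv lam t c k : lam != 0 ->
  lhsT lam t c k = expR (- (lam * t)) *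
    \sum_(j < k.+1) rhsT t c j * exp_coeff (lam * t) (k - j)%N.
Proof.
move=> l0; rewrite /lhsT -!mulrA; congr (_ * _).
rewrite !mulr_sumr; apply: eq_bigr => j _.
have hj : (j <= k)%N by rewrite -ltnS.
move: (nat_of_ord j) hj => {}j hj.
rewrite /rhsT /exp_coeff /=.
have hb := bin_fact hj.
set i := (k - j)%N in hb *.
have hk : k = (j + i)%N by rewrite /i subnKC.
have hC : ('C(k, j))%:R = (k`!)%:R / ((j`!)%:R * (i`!)%:R) :> R.
  by rewrite -hb !natrM mulfK // mulf_neq0 // fact_neq0.
rewrite hC hk exprD !exprMn exprVn.
have := fact_neq0 j; have := fact_neq0 i; have := fact_neq0 (j + i).
move=> h1 h2 h3.
field.
by rewrite h1 h2 h3 expf_neq0.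
Qed.


Lemma key0 (lam t C : R) (c : nat -> R) : 0 < lam -> 0 <= t -> 0 <= C ->
  (forall j, 0 <= c j <= C ^+ j) ->
  [/\ cvgn (series (lhsT lam t c)), cvgn (series (rhsT t c)) &
      limn (series (lhsT lam t c)) = limn (series (rhsT t c))].
Proof.
move=> lam0 t0 C0 hc.
set a := rhsT t c.
set b := exp_coeff (lam * t).
have a0 : forall j, 0 <= a j.
  move=> j; rewrite /a /rhsT; apply: mulr_ge0; last by case/andP: (hc j).
  by apply: divr_ge0; [exact: exprn_ge0|exact: ler0n].
have b0 : forall j, 0 <= b j by move=> j; apply: exp_coeff_ge0; exact: mulr_ge0 (ltW lam0) t0.
have cb : cvgn (series b) by exact: is_cvg_series_exp_coeff.
have aub : forall N, series a N <= expR (C * t).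
  move=> N; apply: (@le_trans _ _ (series (exp_coeff (C * t)) N)).
    rewrite !seriesE'; apply: ler_sum => j _.
    rewrite /a /rhsT /exp_coeff /=.
    rewrite [X in _ <= X](_ : _ = t ^+ j / (j`!)%:R * C ^+ j); last by rewrite exprMn; ring.
    apply: ler_wpM2l; first by apply: divr_ge0; [exact: exprn_ge0|exact: ler0n].
    by case/andP: (hc j).
  apply: series_le_lim; last exact: is_cvg_series_exp_coeff.
  by move=> k; apply: exp_coeff_ge0; exact: mulr_ge0.
have ca : cvgn (series a).
  apply: nondecreasing_is_cvgn; first exact: series_nd.
  by exists (expR (C * t)) => _ [N _ <-].
set S := series (fun k => \sum_(j < k.+1) a j * b (k - j)%N).
have S0 : forall k, 0 <= \sum_(j < k.+1) a j * b (k - j)%N.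
  by move=> k; apply: sumr_ge0 => j _; exact: mulr_ge0.
have Snd : nondecreasing_seq S by exact: series_nd.
have ST : forall N, S N = \sum_(j < N) a j * series b (N - j)%N by move=> N; exact: triangle.
have Sub : forall N, S N <= limn (series a) * limn (series b).
  move=> N; rewrite ST; apply: (@le_trans _ _ (series a N * limn (series b))).
    rewrite seriesE' mulr_suml; apply: ler_sum => j _.
    by apply: ler_wpM2l => //; exact: series_le_lim.
  apply: ler_wpM2r; first by apply: (le_trans (@series_ge0 b 0%N b0)); exact: series_le_lim.
  exact: series_le_lim.
have cS : cvgn S.
  apply: nondecreasing_is_cvgn => //.
  by exists (limn (series a) * limn (series b)) => _ [N _ <-].
have lSle : limn S <= limn (series a) * limn (series b).
  by apply: limr_le => //; apply: nearW => N; exact: Sub.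
have lSge : limn (series a) * limn (series b) <= limn S.
  rewrite -limM //; apply: limr_le; first exact: is_cvgM.
  apply: nearW => M /=.
  apply: limr_ge => //.
  near=> N.
  have hN : (M + M <= N)%N by near: N; exact: nbhs_infty_ge.
  apply: (@le_trans _ _ (S (M + M)%N)); last exact: Snd.
  rewrite ST big_split_ord /=.
  apply: (@le_trans _ _ (\sum_(j < M) a j * series b (M + M - j)%N)); last first.
    by rewrite lerDl; apply: sumr_ge0 => j _; apply: mulr_ge0 => //; exact: series_ge0.
  rewrite seriesE' mulr_suml; apply: ler_sum => j _.
  apply: ler_wpM2l => //; apply: series_nd => //.
  by have := ltn_ord j; lia.
have hlS : limn S = limn (series a) * limn (series b) by apply/le_anti; rewrite lSle lSge.
have hL : series (lhsT lam t c) = (fun N => expR (- (lam * t)) * S N).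
  apply/funext => N; rewrite /S !seriesE' mulr_sumr; apply: eq_bigr => k _.
  by rewrite lhsT_conv // gt_eqF.
have cL : cvgn (series (lhsT lam t c)) by rewrite hL; apply: is_cvgMl_tmp.
split => //.
rewrite hL (_ : (fun N => _) = (fun=> expR (- (lam * t))) \* S) //.
rewrite limM //; last exact: is_cvg_cst.
rewrite lim_cst; last exact: norm_hausdorff.
have -> : limn S = limn (series a) * expR (lam * t) by exact: hlS.
by rewrite expRN mulrCA mulVf ?mulr1 // gt_eqF // expR_gt0.
Unshelve. all: by end_near.
Qed.


Lemma lhsT_B lam t c1 c2 : lhsT lam t (fun j => c1 j - c2 j) = lhsT lam t c1 - lhsT lam t c2.
Proof.
apply/funext => k; rewrite /lhsT /= !fctE -mulrBr -sumrB; congr (_ * _).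
by apply: eq_bigr => j _; rewrite mulrBr.
Qed.

Lemma rhsT_B t c1 c2 : rhsT t (fun j => c1 j - c2 j) = rhsT t c1 - rhsT t c2.
Proof. by apply/funext => k; rewrite /rhsT /= !fctE mulrBr. Qed.

Lemma key (lam t C : R) (c : nat -> R) : 0 < lam -> 0 <= t -> 0 <= C ->
  (forall j, `|c j| <= C ^+ j) ->
  limn (series (lhsT lam t c)) = limn (series (rhsT t c)).
Proof.
move=> lam0 t0 C0 hc.
pose cp j := (`|c j| + c j) / 2; pose cn j := (`|c j| - c j) / 2.
have hce : c = (fun j => cp j - cn j) by apply/funext => j; rewrite /cp /cn; field.
have hb : forall j, - `|c j| <= c j <= `|c j| by move=> j; rewrite -ler_norml.
have hp : forall j, 0 <= cp j <= C ^+ j.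
  move=> j; have := hb j; have := hc j; rewrite /cp => h1 /andP[h2 h3].
  by apply/andP; split; lra.
have hn : forall j, 0 <= cn j <= C ^+ j.
  move=> j; have := hb j; have := hc j; rewrite /cn => h1 /andP[h2 h3].
  by apply/andP; split; lra.
have [c1 c2 e1] := @key0 lam t C cp lam0 t0 C0 hp.
have [c3 c4 e2] := @key0 lam t C cn lam0 t0 C0 hn.
by rewrite hce lhsT_B rhsT_B !lim_seriesB // e1 e2.
Qed.

End Analytic.

Section Comb.
Variable R : realType.

Definition Op {T : Type} (w : T -> seq (R * T)) (f : T -> R) (s : T) : R :=
  \sum_(q <- w s) q.1 * f q.2.

Lemma distK_sum (step : seq int -> seq (R * seq int)) k s0 f :
  \sum_(p <- distK step k s0) p.1 * f p.2 = iter k (Op step) f s0.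
Proof.
elim: k f => [|k IH] f; first by rewrite /= big_seq1 mul1r.
rewrite iterSr -IH /= big_flatten /= big_map.
apply: eq_bigr => p _; rewrite big_map /Op mulr_sumr.
by apply: eq_bigr => q _ /=; rewrite mulrA.
Qed.

Lemma Op_lin {T : Type} (w : T -> seq (R * T)) N (u : nat -> R) (h : nat -> T -> R) s0 :
  Op w (fun s => \sum_(j < N) u j * h j s) s0 = \sum_(j < N) u j * Op w (h j) s0.
Proof.
rewrite /Op; under eq_bigr => q _ do rewrite mulr_sumr.
rewrite exchange_big /=; apply: eq_bigr => j _; rewrite mulr_sumr.
by apply: eq_bigr => q _; rewrite mulrCA.
Qed.

Lemma iter_binom {T : Type} (wP wL : T -> seq (R * T)) (lam : R) :
  (forall f s, Op wP f s = f s + lam^-1 * Op wL f s) ->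
  forall k g s, iter k (Op wP) g s =
    \sum_(j < k.+1) 'C(k, j)%:R * (lam^-1) ^+ j * iter j (Op wL) g s.
Proof.
move=> hP; elim=> [|k IH] g s.
  by rewrite big_ord_recr big_ord0 /= add0r bin0 expr0 !mul1r.
rewrite iterS hP.
have -> : iter k (Op wP) g = fun s => \sum_(j < k.+1) 'C(k, j)%:R * (lam^-1) ^+ j * iter j (Op wL) g s.
  by apply/funext => s'; exact: IH.
rewrite (Op_lin wL (k.+1) (fun j => 'C(k, j)%:R * (lam^-1) ^+ j) (fun j => iter j (Op wL) g)).
under [X in _ + lam^-1 * X = _]eq_bigr => j _ do rewrite -iterS.
rewrite big_ord_recl [RHS]big_ord_recl /= !bin0 !expr0 !mul1r -addrA; congr (_ + _).
rewrite mulr_sumr [X in _ + X = _]big_ord_recr /=.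
rewrite [in RHS](eq_bigr (fun j : 'I_k.+1 => 'C(k, bump 0 j)%:R * lam^-1 ^+ bump 0 j * iter (bump 0 j) (Op wL) g s + lam^-1 * ('C(k, j)%:R * lam^-1 ^+ j * iter j.+1 (Op wL) g s))); last first.
  move=> j _; rewrite /bump /= add1n binS natrD exprS; ring.
rewrite big_split /= big_ord_recr /=.
have -> : 'C(k, bump 0 k) = 0%N by rewrite /bump /= add1n bin_small.
rewrite [X in _ = _ + X]big_ord_recr /=.
ring.
Qed.


Definition stepGen {T Z : Type} (lam : R) (s : T) (F : seq Z) (g : Z -> T * T) : seq (R * T) :=
  (1 - (size F)%:R / lam, s) ::
  flatten [seq [:: ((2 * lam)^-1, (g z).1); ((2 * lam)^-1, (g z).2)] | z <- F].

Definition Lgen {T Z : Type} (s : T) (F : seq Z) (g : Z -> T * T) : seq (R * T) :=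
  flatten [seq [:: (2^-1, (g z).1); (2^-1, (g z).2); (-1, s)] | z <- F].

Lemma Lgen_sum {T Z : Type} (s : T) (F : seq Z) g f :
  \sum_(q <- Lgen s F g) q.1 * f q.2 =
  \sum_(z <- F) (2^-1 * f (g z).1 + 2^-1 * f (g z).2 - f s).
Proof.
elim: F => [|z F IH]; first by rewrite /Lgen !big_nil.
rewrite /Lgen /= !big_cons -/(Lgen s F g) IH /=; ring.
Qed.

Lemma stepGen_sum {T Z : Type} (lam : R) (s : T) (F : seq Z) g f : lam != 0 ->
  \sum_(q <- stepGen lam s F g) q.1 * f q.2 =
  f s + lam^-1 * \sum_(q <- Lgen s F g) q.1 * f q.2.
Proof.
move=> l0; rewrite Lgen_sum big_cons /=.
elim: F => [|z F IH]; first by rewrite /= !big_nil mul0r subr0 mul1r mulr0 !addr0.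
rewrite /= !big_cons /=.
move: IH; set S1 := \sum_(j <- flatten _) _; set S2 := \sum_(j <- F) _ => IH.
have hS1 : S1 = f s + lam^-1 * S2 - (1 - (size F)%:R / lam) * f s by rewrite -IH; ring.
rewrite hS1 -natr1; field.
by rewrite l0.
Qed.

Lemma Lgen_abs {T Z : Type} (s : T) (F : seq Z) g :
  \sum_(q <- Lgen s F g) `|q.1| = 2 * (size F)%:R.
Proof.
elim: F => [|z F IH]; first by rewrite /Lgen big_nil mulr0.
rewrite /Lgen /= !big_cons -/(Lgen s F g) IH /=.
rewrite normrN normr1 ger0_norm ?invr_ge0 ?ler0n // [(size F).+1%:R]mulrSr; field.
by [].
Qed.

Lemma Lgen_all {T Z : Type} (P : T -> bool) (s : T) (F : seq Z) g :
  P s -> (forall z, P (g z).1 && P (g z).2) -> all (fun q => P q.2) (Lgen s F g).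
Proof.
move=> Ps Pg; elim: F => [|z F IH] //=.
by rewrite -/(Lgen s F g) IH Ps andbT; case/andP: (Pg z) => -> ->.
Qed.

Lemma stepGen_all {T Z : Type} (P : T -> bool) (lam : R) (s : T) (F : seq Z) g :
  P s -> (forall z, P (g z).1 && P (g z).2) -> all (fun q => P q.2) (stepGen lam s F g).
Proof.
move=> Ps Pg /=; rewrite Ps /=; elim: F => [|z F IH] //=.
by rewrite IH andbT; case/andP: (Pg z) => -> ->.
Qed.

Lemma iter_bound {T : Type} (w : T -> seq (R * T)) (P : T -> bool) C g :
  0 <= C ->
  (forall s, P s -> \sum_(q <- w s) `|q.1| <= C /\ all (fun q => P q.2) (w s)) ->
  (forall s, P s -> `|g s| <= 1) ->
  forall j s, P s -> `|iter j (Op w) g s| <= C ^+ j.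
Proof.
move=> C0 hw hg; elim=> [|j IH] s Ps; first by rewrite expr0 /=; exact: hg.
rewrite iterS /Op; have [h1 h2] := hw s Ps.
apply: (le_trans (ler_norm_sum _ _ _)).
apply: (@le_trans _ _ (\sum_(q <- w s) `|q.1| * C ^+ j)).
  elim: (w s) h2 => [|q l IHl] /=; first by rewrite !big_nil.
  move=> /andP[Pq Pl]; rewrite !big_cons; apply: lerD; last exact: IHl.
  by rewrite normrM; apply: ler_wpM2l => //; apply: IH.
by rewrite -mulr_suml exprS ler_wpM2r // exprn_ge0.
Qed.

Lemma iter_dual {T1 T2 : Type} (w1 : T1 -> seq (R * T1)) (w2 : T2 -> seq (R * T2)) j :
  forall K : T1 -> T2 -> R,
  (forall x y, Op w1 (fun x' => K x' y) x = Op w2 (K x) y) ->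
  forall x y, iter j (Op w1) (fun x' => K x' y) x = iter j (Op w2) (K x) y.
Proof.
elim: j => [|j IH] K hK x y //.
rewrite !iterSr.
have -> : Op w1 (fun x' => K x' y) = (fun x'' => Op w2 (K x'') y).
  by apply/funext => x''; exact: hK.
apply: (IH (fun x' y' => Op w2 (K x') y')).
move=> x1 y1; rewrite /Op.
under eq_bigr => q _ do rewrite mulr_sumr.
rewrite exchange_big /=; apply: eq_bigr => q _.
rewrite -[RHS]/(q.1 * Op w2 (K x1) q.2) -hK /Op mulr_sumr.
by apply: eq_bigr => q' _; rewrite mulrCA.
Qed.

Lemma distK_all (P : seq int -> bool) (step : seq int -> seq (R * seq int)) k s0 :
  P s0 -> (forall s, P s -> all (fun q => P q.2) (step s)) ->
  all (fun p => P p.2) (distK step k s0).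
Proof.
move=> P0 hs; elim: k => [|k IH] /=; first by rewrite P0.
elim: (distK step k s0) IH => [|p l IHl] //= /andP[Pp Pl].
rewrite all_cat all_map IHl // andbT; apply/allP => q qs /=.
by move/allP: (hs _ Pp) => /(_ q qs).
Qed.

Lemma rat_lt (u v : int) : ((u%:~R + 1/2 < v%:~R :> rat) = (u < v)).
Proof.
case: (ltP u v) => h.
  have h1 : (u + 1)%:~R <= v%:~R :> rat by rewrite ler_int; lia.
  by rewrite intrD in h1; apply/idP; lra.
have h1 : v%:~R <= u%:~R :> rat by rewrite ler_int.
by apply/negbTE; rewrite -leNgt; lra.
Qed.

Lemma rat_le (u v : int) : ((v%:~R <= u%:~R + 1/2 :> rat) = (v <= u)).
Proof.
case: (leP v u) => h.
  have h1 : v%:~R <= u%:~R :> rat by rewrite ler_int.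
  by apply/idP; lra.
have h1 : (u + 1)%:~R <= v%:~R :> rat by rewrite ler_int; lia.
by rewrite intrD in h1; apply/negbTE; rewrite -ltNge; lra.
Qed.

Lemma arrayYE m n x y : arrayY m n x y =
  \matrix_(i < m, j < n.-1) ((nth 0 y j < nth 0 x i) && (nth 0 x i <= nth 0 y j.+1)).
Proof. by apply/matrixP => i j; rewrite !mxE rat_lt rat_le. Qed.

Lemma moveAt_id s z d : z \notin s -> moveAt s z d = s.
Proof.
move=> zs; rewrite /moveAt; apply: map_id_in => w ws.
by case: eqP => // ewz; rewrite -ewz ws in zs.
Qed.

Lemma size_moveAt s z d : size (moveAt s z d) = size s.
Proof. by rewrite size_map. Qed.

Lemma nth_moveAt s z d i : (i < size s)%N ->
  nth 0 (moveAt s z d) i = if nth 0 s i == z then nth 0 s i + d else nth 0 s i.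
Proof. by move=> hi; rewrite (nth_map 0). Qed.

Lemma G3 m n x y z : size x = m -> size y = n ->
  arrayY m n (moveAt x z 1) y = arrayY m n x (moveAt y z (-1)).
Proof.
move=> sx sy; rewrite !arrayYE; apply/matrixP => i j; rewrite !mxE.
have hi : (i < size x)%N by rewrite sx.
have hj : (j < size y)%N by rewrite sy; have := ltn_ord j; lia.
have hj1 : (j.+1 < size y)%N by rewrite sy; have := ltn_ord j; lia.
rewrite !nth_moveAt //.
move: (nth 0 x i) (nth 0 y j) (nth 0 y j.+1) => u v w.
do 3 case: eqP => ?; lia.
Qed.

Lemma G3' m n x y z : size x = m -> size y = n ->
  arrayY m n (moveAt x z (-1)) y = arrayY m n x (moveAt y (z - 1) 1).
Proof.
move=> sx sy; rewrite !arrayYE; apply/matrixP => i j; rewrite !mxE.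
have hi : (i < size x)%N by rewrite sx.
have hj : (j < size y)%N by rewrite sy; have := ltn_ord j; lia.
have hj1 : (j.+1 < size y)%N by rewrite sy; have := ltn_ord j; lia.
rewrite !nth_moveAt //.
move: (nth 0 x i) (nth 0 y j) (nth 0 y j.+1) => u v w.
do 3 case: eqP => ?; lia.
Qed.

Lemma sum_inter (f : int -> R) (s1 s2 : seq int) : uniq s1 -> uniq s2 ->
  (forall z, f z != 0 -> (z \in s1) && (z \in s2)) ->
  \sum_(z <- s1) f z = \sum_(z <- s2) f z.
Proof.
move=> u1 u2 hf.
have e : forall (s s' : seq int), (forall z, f z != 0 -> z \in s') ->
    \sum_(z <- s) f z = \sum_(z <- [seq z <- s | z \in s']) f z.
  move=> s s' h; rewrite big_filter [RHS]big_mkcond /=; apply: eq_bigr => z _.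
  by case: ifP => // zs; apply/eqP; apply: contraFT zs => /h.
rewrite (e s1 s2); last by move=> z /hf /andP[].
rewrite [RHS](e s2 s1); last by move=> z /hf /andP[].
apply: perm_big; apply: uniq_perm; rewrite ?filter_uniq //.
by move=> z; rewrite !mem_filter andbC.
Qed.

Section Duality.
Variables (a b : int) (m n : nat) (A : 'M[bool]_(m, n.-1)).

Definition Kf (x y : seq int) : R :=
  ((arrayY m n x y == A) && (size x == m) && (size y == n))%:R.
Definition FX (s : seq int) := undup [seq z <- s | (z != a) && (z != b)].
Definition gX (s : seq int) (z : int) := (moveAt s z 1, moveAt s z (-1)).
Definition gY (s : seq int) (z : int) :=
  (if (z + 1 == a) || (z + 1 == b) then s else moveAt s z 1,
   if (z == a) || (z == b) then s else moveAt s z (-1)).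
Definition LXw (s : seq int) := Lgen s (FX s) (gX s).
Definition LYw (s : seq int) := Lgen s (undup s) (gY s).

Lemma size_gY1 s z : size (gY s z).1 = size s.
Proof. by rewrite /gY /=; case: ifP => //; rewrite size_moveAt. Qed.
Lemma size_gY2 s z : size (gY s z).2 = size s.
Proof. by rewrite /gY /=; case: ifP => //; rewrite size_moveAt. Qed.

Lemma Kf_x0 (x x' y : seq int) : size x' = size x -> size x != m -> Kf x' y = 0.
Proof. by move=> e sx; rewrite /Kf e (negbTE sx) andbF. Qed.
Lemma Kf_y0 (x y y' : seq int) : size y' = size y -> size y != n -> Kf x y' = 0.
Proof. by move=> e sy; rewrite /Kf e (negbTE sy) andbF. Qed.

Lemma dual_gen x y : Op LXw (fun x' => Kf x' y) x = Op LYw (Kf x) y.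
Proof.
rewrite /Op /LXw /LYw (Lgen_sum x (FX x) (gX x) (fun x' => Kf x' y)) Lgen_sum.
case: (boolP (size x == m)) => sx; last first.
  have K0 : forall x' y', size x' = size x -> Kf x' y' = 0 by move=> x' y' e; exact: (Kf_x0 x x' y' e sx).
  rewrite !big1 // => z _; rewrite !K0 ?size_moveAt //; ring.
case: (boolP (size y == n)) => sy; last first.
  have K0 : forall x' y', size y' = size y -> Kf x' y' = 0 by move=> x' y' e; exact: (Kf_y0 x' y y' e sy).
  rewrite !big1 // => z _; rewrite !K0 ?size_moveAt ?size_gY1 ?size_gY2 //; ring.
move/eqP: sx => sx; move/eqP: sy => sy.
pose P z := (z != a) && (z != b).
pose T1 z := Kf (moveAt x z 1) y - Kf x y.
pose T2 z := Kf (moveAt x z (-1)) y - Kf x y.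
have eL : \sum_(z <- FX x) (2^-1 * Kf (gX x z).1 y + 2^-1 * Kf (gX x z).2 y - Kf x y) =
    2^-1 * \sum_(z <- undup x) (if P z then T1 z else 0) +
    2^-1 * \sum_(z <- undup x) (if P z then T2 z else 0).
  rewrite /FX -filter_undup big_filter big_mkcond !mulr_sumr -big_split /=.
  apply: eq_bigr => z _; rewrite /P; case: ifP => _; rewrite /T1 /T2 /=.
  by field.
  by rewrite !mulr0 addr0.
have eR : \sum_(z <- undup y) (2^-1 * Kf x (gY y z).1 + 2^-1 * Kf x (gY y z).2 - Kf x y) =
    2^-1 * \sum_(z <- undup y) (if P (z + 1) then T2 (z + 1) else 0) +
    2^-1 * \sum_(z <- undup y) (if P z then T1 z else 0).
  rewrite !mulr_sumr -big_split /=; apply: eq_bigr => z _.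
  rewrite /gY /= /P /T1 /T2.
  have h1 : Kf x (moveAt y z 1) = Kf (moveAt x (z + 1) (-1)) y.
    by rewrite /Kf G3' // addrK !size_moveAt.
  have h2 : Kf x (moveAt y z (-1)) = Kf (moveAt x z 1) y.
    by rewrite /Kf G3 // !size_moveAt.
  by case: (z + 1 == a); case: (z + 1 == b); case: (z == a); case: (z == b);
    rewrite /= ?h1 ?h2; field.
rewrite eL eR addrC; congr (_ * _ + _ * _).
  rewrite -(big_map (fun z => z + 1) xpredT (fun z => if P z then T2 z else 0)).
  apply: sum_inter; rewrite ?undup_uniq ?map_inj_uniq ?undup_uniq //; first exact: addIr.
  move=> z; case: ifP => _; last by rewrite eqxx.
  rewrite /T2 mem_undup; case: (boolP (z \in x)) => zx; last first.
    by rewrite moveAt_id // subrr eqxx.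
  rewrite /Kf G3' // !size_moveAt; case: (boolP (z - 1 \in y)) => zy; last first.
    by rewrite moveAt_id // subrr eqxx.
  by move=> _; apply/mapP; exists (z - 1); rewrite ?mem_undup // subrK.
apply: sum_inter; rewrite ?undup_uniq //.
move=> z; case: ifP => _; last by rewrite eqxx.
rewrite /T1 !mem_undup; case: (boolP (z \in x)) => zx; last first.
  by rewrite moveAt_id // subrr eqxx.
rewrite /Kf G3 // !size_moveAt; case: (boolP (z \in y)) => zy //.
by rewrite moveAt_id // subrr eqxx.
Qed.

End Duality.
End Comb.


Lemma probK_iter (R : realType) (step w : seq int -> seq (R * seq int)) (E : pred (seq int))
  (K : seq int -> R) (lam : R) (m : nat) (s0 : seq int) k :
  size s0 = m ->
  (forall s, size s == m -> all (fun q => size q.2 == m) (step s)) ->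
  (forall s, size s = m -> (E s)%:R = K s) ->
  (forall f s, Op R step f s = f s + lam^-1 * Op R w f s) ->
  probK step k s0 E = \sum_(j < k.+1) 'C(k, j)%:R * lam^-1 ^+ j * iter j (Op R w) K s0.
Proof.
move=> s0m hst hEK hop.
have hall := @distK_all R (fun s => size s == m) step k s0 (introT eqP s0m) hst.
rewrite /probK (@eq_big_seq _ _ _ _ _ _ (fun p => p.1 * K p.2)); last first.
  by move=> p pd; move/allP: hall => /(_ p pd) /eqP /hEK ->.
by rewrite distK_sum (iter_binom _ _ _ _ hop).
Qed.

Theorem proposition3p1 (R : realType) (a b : int) (m n : nat)
  (x yk : seq int) (t : R) :
  a < b -> size x = m -> size yk = n ->
  sorted <=%R x -> sorted <=%R yk -> 0 <= t ->
  forall A : 'M[bool]_(m, n.-1),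
    ctmc_prob (m.+1)%:R (stepX a b (m.+1)%:R) x t
      (fun X => arrayX m n yk X == A)
    = ctmc_prob (n.+1)%:R (stepY a b (n.+1)%:R) yk t
      (fun Y => arrayY m n x Y == A).
Proof.
move=> _ sx sy _ _ t0 A.
pose K := Kf R m n A.
pose c j := iter j (Op R (LXw R a b)) (fun x' => K x' yk) x.
have hc : forall j, iter j (Op R (LYw R a b)) (K x) yk = c j.
  by move=> j; rewrite /c (iter_dual R (LXw R a b) (LYw R a b) j K (dual_gen R a b m n A)).
have hL : ctmc_prob (m.+1)%:R (stepX a b (m.+1)%:R) x t (fun X => arrayX m n yk X == A)
    = limn (series (lhsT R (m.+1)%:R t c)).
  rewrite /ctmc_prob; congr (limn (series _)); apply/funext => k; rewrite /lhsT; congr (_ * _).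
  apply: (probK_iter R _ (LXw R a b) _ _ _ m x k sx).
  - move=> s /eqP ss.
    rewrite (_ : stepX a b (m.+1)%:R s = stepGen R (m.+1)%:R s (FX a b s) (gX s)) //.
    apply: (@stepGen_all R _ _ (fun s' => size s' == m)) => [|z]; first by rewrite ss.
    by rewrite /= !size_moveAt ss eqxx.
  - by move=> s ss; rewrite /K /Kf ss sy !eqxx !andbT.
  - move=> f s; rewrite /Op; apply: (@stepGen_sum R _ _ _ s (FX a b s) (gX s)).
    by rewrite pnatr_eq0.
have hR : ctmc_prob (n.+1)%:R (stepY a b (n.+1)%:R) yk t (fun Y => arrayY m n x Y == A)
    = limn (series (lhsT R (n.+1)%:R t c)).
  rewrite /ctmc_prob; congr (limn (series _)); apply/funext => k; rewrite /lhsT; congr (_ * _).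
  under eq_bigr => j _ do rewrite -hc.
  apply: (probK_iter R _ (LYw R a b) _ _ _ n yk k sy).
  - move=> s /eqP ss.
    rewrite (_ : stepY a b (n.+1)%:R s = stepGen R (n.+1)%:R s (undup s) (gY a b s)) //.
    apply: (@stepGen_all R _ _ (fun s' => size s' == n)) => [|z]; first by rewrite ss.
    by rewrite size_gY1 size_gY2 ss eqxx.
  - by move=> s ss; rewrite /K /Kf ss sx !eqxx !andbT.
  - move=> f s; rewrite /Op; apply: (@stepGen_sum R _ _ _ s (undup s) (gY a b s)).
    by rewrite pnatr_eq0.
have C0 : 0 <= 2 * m%:R :> R by rewrite mulr_ge0 ?ler0n.
have hb : forall j, `|c j| <= (2 * m%:R) ^+ j.
  move=> j; apply: (@iter_bound R _ (LXw R a b) (fun s => size s == m)) => //; last by rewrite sx.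
    move=> s /eqP ss; split.
      rewrite /LXw Lgen_abs ler_wpM2l ?ler0n // ler_nat -ss /FX.
      rewrite (leq_trans (size_undup _)) // size_filter count_size //.
    rewrite /LXw; apply: (@Lgen_all R _ _ (fun s' => size s' == m)) => [|z]; first by rewrite ss.
    by rewrite /= !size_moveAt ss eqxx.
  by move=> s _; rewrite /K /Kf; case: (_ && _); rewrite ?normr1 ?normr0.
rewrite hL hR !(@key R _ t (2 * m%:R) c) //.
Qed.
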